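(* Let $W,V$ be subspaces of $\mathbb{R}^n$ with $\mathbb{R}^n=W\oplus V^\perp$, and let $\mu\in\mathcal{P}_2(W)$ be a probabilistic frame for $W$ with frame operator $\mathbf{S}_\mu$. Fix $\mathbf{f}\in\mathbb{R}^n$ and suppose $\boldsymbol{\pi}_{WV^\perp}\mathbf{f}=\int_W\mathbf{x}\,\omega(\mathbf{x})\,d\mu(\mathbf{x})$ for some $\omega\in L^2(\mu,W)$. Then $$\int_W|\omega(\mathbf{x})|^2d\mu(\mathbf{x})=\int_W|\langle\mathbf{f},\boldsymbol{\pi}_{VW^\perp}\mathbf{S}_\mu^\dagger\mathbf{x}\rangle|^2d\mu(\mathbf{x})+\int_W|\omega(\mathbf{x})-\langle\mathbf{f},\boldsymbol{\pi}_{VW^\perp}\mathbf{S}_\mu^\dagger\mathbf{x}\rangle|^2d\mu(\mathbf{x}).$$ Consequently $\int_W|\omega(\mathbf{x})|^2d\mu(\mathbf{x})\ge\int_W|\langle\mathbf{f},\boldsymbol{\pi}_{VW^\perp}\mathbf{S}_\mu^\dagger\mathbf{x}\rangle|^2d\mu(\mathbf{x})$, with equality if and only if $\omega(\mathbf{x})=\langle\mathbf{f},\boldsymbol{\pi}_{VW^\perp}\mathbf{S}_\mu^\dagger\mathbf{x}\rangle$ for $\mu$-almost all $\mathbf{x}\in W$.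
   Context: $\mathcal{P}_2(W)$ denotes Borel probability measures on $\mathbb{R}^n$ concentrated on $W$ with finite second moment. $\mu\in\mathcal{P}_2(W)$ is a probabilistic frame for $W$ if there exist $0<A\le B<\infty$ with $A\|\mathbf{x}\|^2\le\int_W|\langle\mathbf{x},\mathbf{y}\rangle|^2d\mu(\mathbf{y})\le B\|\mathbf{x}\|^2$ for all $\mathbf{x}\in W$; its frame operator is $\mathbf{S}_\mu=\int_W\mathbf{y}\mathbf{y}^td\mu(\mathbf{y})$, with Moore–Penrose inverse $\mathbf{S}_\mu^\dagger$. $L^2(\mu,W)$ is the space of real-valued square-$\mu$-integrable functions on $W$. $\boldsymbol{\pi}_{WV^\perp}$ is the oblique projection onto $W$ along $V^\perp$ and $\boldsymbol{\pi}_{VW^\perp}$ the oblique projection onto $V$ along $W^\perp$. *)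

(* Defs.v *)
From HB Require Import structures.
From mathcomp Require Import all_boot all_order all_algebra.
From mathcomp Require Import all_classical all_reals all_analysis.
Set Implicit Arguments. Unset Strict Implicit. Unset Printing Implicit Defensive.
Import Order.TTheory GRing.Theory Num.Theory.
Import numFieldNormedType.Exports.
Local Open Scope classical_set_scope.
Local Open Scope ring_scope.

(* Conventions: R^n is represented by row vectors 'rV[R]_n.
   A subspace of R^n is represented by a square matrix U : 'M[R]_n through
   its row space; membership is (x <= U)%MS. *)

Definition Rn (R : realType) (n : nat) := g_sigma_algebraType (open : set_system 'rV[R]_n).

Definition dotv (R : realType) n (u v : 'rV[R]_n) : R := \sum_(i < n) u 0 i * v 0 i.

Definition subsp (R : realType) n (U : 'M[R]_n) : set (Rn R n) :=
  [set x : 'rV[R]_n | (x <= U)%MS].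

(* Orthogonal complement U^perp = { x | <x,u> = 0 for all u in U }
   = { x | x *m U^T = 0 } = row space of kermx U^T. *)
Definition orthc (R : realType) n (U : 'M[R]_n) : 'M[R]_n := kermx U^T.

(* Oblique projection onto A along B (when R^n = A (+) B), acting on row
   vectors by right multiplication: x *m oblique_proj A B. *)
Definition oblique_proj (R : realType) n (A B : 'M[R]_n) : 'M[R]_n := proj_mx A B.

Definition in_P2 (R : realType) n (W : 'M[R]_n) (mu : probability (Rn R n) R) : Prop :=
  mu (~` subsp W) = 0%E /\
  (\int[mu]_(y in subsp W) (dotv (y : 'rV[R]_n) y)%:E < +oo)%E.

Definition prob_frame (R : realType) n (W : 'M[R]_n) (mu : probability (Rn R n) R) : Prop :=
  exists A B : R, 0 < A /\ A <= B /\
    forall x : 'rV[R]_n, (x <= W)%MS ->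
      ((A * dotv x x)%:E <= \int[mu]_(y in subsp W) ((dotv x (y : 'rV[R]_n)) ^+ 2)%:E)%E /\
      (\int[mu]_(y in subsp W) ((dotv x (y : 'rV[R]_n)) ^+ 2)%:E <= (B * dotv x x)%:E)%E.

Definition frame_op (R : realType) n (W : 'M[R]_n) (mu : probability (Rn R n) R) : 'M[R]_n :=
  \matrix_(i < n, j < n) Rintegral mu (subsp W) (fun y : Rn R n => (y : 'rV[R]_n) 0 i * (y : 'rV[R]_n) 0 j).

(* X is the Moore-Penrose inverse of A (the four Penrose equations;
   the Moore-Penrose inverse exists and is unique). *)
Definition moore_penrose (R : realType) n (A X : 'M[R]_n) : Prop :=
  [/\ A *m X *m A = A, X *m A *m X = X, (A *m X)^T = A *m X & (X *m A)^T = X *m A].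

Definition in_L2 (R : realType) n (W : 'M[R]_n) (mu : probability (Rn R n) R)
  (w : Rn R n -> R) : Prop :=
  measurable_fun (subsp W) w /\ (\int[mu]_(x in subsp W) (w x ^+ 2)%:E < +oo)%E.

(* Main.v *)
Require Import Defs.
From HB Require Import structures.
From mathcomp Require Import all_boot all_order all_algebra.
From mathcomp Require Import all_classical all_reals all_analysis.
From mathcomp Require Import zify ring lra.
From mathcomp Require Import measurable_realfun.
Set Implicit Arguments. Unset Strict Implicit. Unset Printing Implicit Defensive.
Import Order.TTheory GRing.Theory Num.Theory.
Import numFieldNormedType.Exports.
Local Open Scope classical_set_scope.
Local Open Scope ring_scope.

Notation RT R n := (g_sigma_algebraType (open : set_system 'rV[R]_n)).
Lemma mcoord (R : realType) n (D : set (RT R n)) (i : 'I_n) :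
  measurable_fun D (fun x : RT R n => (x : 'rV[R]_n) 0 i).
Proof.
have H : measurable_fun (setT : set (RT R n)) (fun x : RT R n => (x : 'rV[R]_n) 0 i).
  refine (@measurability _ _ _ R _ _ _ (measurable_realfun.RGenOpens.measurableE R) _).
  move=> _ [_ [a [b ->]] <-]; apply: measurableI => //.
  apply: sub_sigma_algebra.
  have := @coord_continuous R 1 n 0 i.
  move/continuousP; apply; exact: interval_open.
exact: (measurable_funS measurableT (@subsetT _ D) H).
Qed.

Lemma mlin (R : realType) n (D : set (RT R n)) (c : 'I_n -> R) :
  measurable_fun D (fun x : RT R n => \sum_i (x : 'rV[R]_n) 0 i * c i).
Proof.
apply: measurable_sum => i; apply: measurable_realfun.measurable_funM; first exact: mcoord.
exact: measurable_cst.
Qed.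

Lemma msubsp (R : realType) n (W : 'M[R]_n) : measurable (subsp W : set (RT R n)).
Proof.
have -> : subsp W = \bigcap_(j in [set: 'I_n])
   ((fun x : RT R n => \sum_i (x : 'rV[R]_n) 0 i * cokermx W i j) @^-1` [set 0]).
  apply/seteqP; split => x /=.
    rewrite /subsp /= submxE => /eqP H j _ /=.
    by have := congr1 (fun M : 'rV[R]_n => M 0 j) H; rewrite !mxE.
  move=> H; rewrite /subsp /= submxE; apply/eqP/rowP => j.
  by rewrite !mxE; apply: H.
apply: fin_bigcap_measurable => [|j _]; first exact: finite_finset.
rewrite -[X in measurable X]setTI.
by apply: mlin => //; exact: measurable_set1.
Qed.
Section LinAlg.
Variable R : realType.
Variable n : nat.
Implicit Types (A B U V W X Y : 'M[R]_n) (u v x y : 'rV[R]_n).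

Lemma orth_ker m p (U : 'M[R]_n) (u : 'M[R]_(m, n)) (v : 'M[R]_(p, n)) :
  (u <= U)%MS -> (v <= kermx U^T)%MS -> u *m v^T = 0.
Proof.
move=> /submxP[D ->]; rewrite sub_kermx => /eqP H.
by rewrite -mulmxA -[U *m _]trmxK trmx_mul trmxK H trmx0 mulmx0.
Qed.

Lemma rowv_eq u v : (forall y, u *m y^T = v *m y^T) -> u = v.
Proof.
move=> H; apply/rowP => j; have := H (delta_mx 0 j).
rewrite trmx_delta -!colE => /(congr1 (fun M : 'cV[R]_1 => M 0 0)).
by rewrite !mxE.
Qed.

Lemma full_span V W : (W :&: orthc V = 0)%MS -> (W + orthc V :=: 1%:M)%MS ->
  forall y, (y <= V + orthc W)%MS.
Proof.
move=> Hd Hs.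
have rk := mxrank_sum_cap W (orthc V).
rewrite Hd mxrank0 addn0 Hs mxrank1 /orthc mxrank_ker mxrank_tr in rk.
have rV := rank_leq_col V.
have eqr : \rank W = \rank V by lia.
have Hc : (V :&: orthc W = 0)%MS.
  apply/eqP/rowV0P => v; rewrite sub_capmx => /andP[vV vW].
  have h1 : W *m v^T = 0.
    by rewrite -[W]trmxK -trmx_mul; move: vW; rewrite sub_kermx => /eqP ->; rewrite trmx0.
  have h2 : orthc V *m v^T = 0.
    rewrite -[orthc V *m _]trmxK trmx_mul trmxK (orth_ker vV) ?trmx0 //.
  have: (1%:M <= W + orthc V)%MS by rewrite Hs.
  rewrite addsmxE => /submxP[E HE].
  apply: trmx_inj; rewrite trmx0 -[v^T]mul1mx HE -mulmxA mul_col_mx h1 h2.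
  by rewrite col_mx0 mulmx0.
have rk2 := mxrank_sum_cap V (orthc W).
rewrite Hc mxrank0 addn0 /orthc mxrank_ker mxrank_tr in rk2.
have rW := rank_leq_col W.
move=> y; apply: submx_trans (submx1 y) _.
rewrite sub1mx /row_full; apply/eqP; rewrite /orthc; lia.
Qed.

Lemma proj_adj V W : (W :&: orthc V = 0)%MS -> (W + orthc V :=: 1%:M)%MS ->
  (oblique_proj W (orthc V))^T = oblique_proj V (orthc W).
Proof.
move=> Hd Hs.
set PW := oblique_proj W (orthc V); set PV := oblique_proj V (orthc W).
have key x y : x *m PW *m y^T = x *m (y *m PV)^T.
  have xs : (x <= W + orthc V)%MS by rewrite Hs submx1.
  have ys : (y <= V + orthc W)%MS by exact: full_span.
  have aW : (x *m PW <= W)%MS by exact: proj_mx_sub.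
  have bV : (x - x *m PW <= orthc V)%MS by exact: proj_mx_compl_sub.
  have cV : (y *m PV <= V)%MS by exact: proj_mx_sub.
  have dW : (y - y *m PV <= orthc W)%MS by exact: proj_mx_compl_sub.
  have e1 : x *m PW *m (y - y *m PV)^T = 0 by exact: orth_ker aW dW.
  have e2 : (y *m PV) *m (x - x *m PW)^T = 0 by exact: orth_ker cV bV.
  have e2' : (x - x *m PW) *m (y *m PV)^T = 0.
    by rewrite -[LHS]trmxK trmx_mul trmxK e2 trmx0.
  move: e1 e2'; rewrite linearB /= mulmxBr mulmxBl => /eqP; rewrite subr_eq0 => /eqP ->.
  by move/eqP; rewrite subr_eq0 => /eqP ->.
apply/matrixP => i j; rewrite mxE.
have := key (delta_mx 0 j) (delta_mx 0 i).
rewrite trmx_delta -rowE -colE.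
rewrite trmx_mul trmx_delta mulmxA -rowE -colE => /(congr1 (fun M : 'cV[R]_1 => M 0 0)).
by rewrite !mxE => ->.
Qed.

Lemma mp_uniq A X Y : moore_penrose A X -> moore_penrose A Y -> X = Y.
Proof.
move=> [X1 X2 X3 X4] [Y1 Y2 Y3 Y4].
have AXY : A *m X = A *m Y.
  rewrite -X3 trmx_mul -{1}Y1 !trmx_mul !mulmxA -trmx_mul X3.
  by rewrite -mulmxA -trmx_mul Y3 mulmxA X1.
have XAY : X *m A = Y *m A.
  rewrite -X4 trmx_mul -{1}Y1 !trmx_mul !mulmxA -trmx_mul Y4 -mulmxA -trmx_mul X4.
  by rewrite -!mulmxA [A *m (X *m A)]mulmxA X1.
by rewrite -X2 -mulmxA AXY mulmxA XAY Y2.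
Qed.

Lemma mp_sym A X : A^T = A -> moore_penrose A X -> X^T = X.
Proof.
move=> SA HX; apply: (mp_uniq _ HX); case: HX => H1 H2 H3 H4.
split.
- by rewrite -SA -!trmx_mul mulmxA H1.
- by rewrite -SA -!trmx_mul mulmxA H2.
- by rewrite trmx_mul trmxK SA -H4 trmx_mul SA.
- by rewrite trmx_mul trmxK SA -H3 trmx_mul SA.
Qed.

End LinAlg.

Unset Implicit Arguments.
Lemma key_alg (R : realType) n (f : 'rV[R]_n) (P Q Sd S : 'M[R]_n) :
  Q^T = P -> Sd^T = Sd -> Sd *m S *m Sd = Sd ->
  f *m P *m (Sd *m Q *m f^T) = (Sd *m Q *m f^T)^T *m S *m (Sd *m Q *m f^T).
Proof.
move=> PT SdT H2.
have H3 (X : 'cV[R]_n) : Sd *m (S *m (Sd *m X)) = Sd *m X by rewrite !mulmxA H2.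
by rewrite !trmx_mul trmxK PT SdT -!mulmxA H3.
Qed.

Theorem proposition5p1 (R : realType) (n : nat) (W V : 'M[R]_n)
  (Hdirect : (W :&: orthc V = 0)%MS) (Hspan : (W + orthc V :=: 1%:M)%MS)
  (mu : probability (Rn R n) R) (HP2 : in_P2 W mu) (Hframe : prob_frame W mu)
  (Sdag : 'M[R]_n) (HSdag : moore_penrose (frame_op W mu) Sdag)
  (f : 'rV[R]_n) (w : Rn R n -> R) (Hw : in_L2 W mu w)
  (Hrep : forall j : 'I_n,
     ((f *m oblique_proj W (orthc V)) 0 j)%:E =
     (\int[mu]_(x in subsp W) ((x : 'rV[R]_n) 0 j * w x)%:E)%E) :
  let g := fun x : Rn R n => dotv f ((x : 'rV[R]_n) *m Sdag *m oblique_proj V (orthc W)) in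
  [/\ (\int[mu]_(x in subsp W) (w x ^+ 2)%:E =
        \int[mu]_(x in subsp W) (g x ^+ 2)%:E
        + \int[mu]_(x in subsp W) ((w x - g x) ^+ 2)%:E)%E,
      (\int[mu]_(x in subsp W) (g x ^+ 2)%:E <= \int[mu]_(x in subsp W) (w x ^+ 2)%:E)%E
    & ((\int[mu]_(x in subsp W) (w x ^+ 2)%:E = \int[mu]_(x in subsp W) (g x ^+ 2)%:E)%E <->
       {ae mu, forall x, subsp W x -> w x = g x})].
Proof.
move=> g.
have mD : measurable (subsp W : set (Rn R n)) := msubsp W.
pose c : 'cV[R]_n := Sdag *m oblique_proj V (orthc W) *m f^T.
pose xi (i : 'I_n) := fun x : Rn R n => (x : 'rV[R]_n) 0 i.
have gE x : g x = \sum_i xi i x * c i 0.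
  rewrite /g /dotv /xi.
  have -> : \sum_i (x : 'rV[R]_n) 0 i * c i 0 = ((x : 'rV[R]_n) *m c) 0 0.
    by rewrite mxE.
  rewrite /c !mulmxA mxE; apply: eq_bigr => i _.
  by rewrite [f^T i 0]mxE mulrC.
have mxi i : measurable_fun (subsp W) (xi i) by apply: mcoord.
have mw : measurable_fun (subsp W) w := Hw.1.
have mg : measurable_fun (subsp W) g.
  rewrite (_ : g = fun x => \sum_i xi i x * c i 0); last exact/funext.
  exact: mlin.
have dotE (x : Rn R n) : dotv (x : 'rV[R]_n) x = \sum_i xi i x ^+ 2.
  by apply: eq_bigr => i _; rewrite expr2.
have dot_ge0 (x : Rn R n) : 0 <= dotv (x : 'rV[R]_n) x.
  by rewrite dotE; apply: sumr_ge0 => i _; exact: sqr_ge0.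
have dot_ge (x : Rn R n) i : xi i x ^+ 2 <= dotv (x : 'rV[R]_n) x.
  rewrite dotE (bigD1 i) //= lerDl; apply: sumr_ge0 => j _; exact: sqr_ge0.
have mdot : measurable_fun (subsp W) (fun x : Rn R n => dotv (x : 'rV[R]_n) x).
  rewrite (_ : (fun x => _) = fun x => \sum_i xi i x * xi i x); last first.
    by apply/funext => x; rewrite dotE; apply: eq_bigr => i _; rewrite expr2.
  by apply: measurable_sum => i; apply: measurable_realfun.measurable_funM.
have idot : mu.-integrable (subsp W) (fun x : Rn R n => (dotv (x : 'rV[R]_n) x)%:E).
  apply/integrableP; split; first exact/measurable_realfun.measurable_EFinP.
  under eq_integral => x _ do rewrite gee0_abs ?lee_fin //.
  exact: HP2.2.
have mw2 : measurable_fun (subsp W) (fun x => w x ^+ 2).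
  exact: measurable_realfun.measurable_funX.
have iw2 : mu.-integrable (subsp W) (fun x => (w x ^+ 2)%:E).
  apply/integrableP; split; first exact/measurable_realfun.measurable_EFinP.
  under eq_integral => x _ do rewrite gee0_abs ?lee_fin ?sqr_ge0 //.
  exact: Hw.2.
have normM (a b : R) : `|a * b| <= a ^+ 2 + b ^+ 2.
  rewrite ler_norml; apply/andP; split; nra.
have ixx i j : mu.-integrable (subsp W) (fun x => (xi i x * xi j x)%:E).
  apply: (le_integrable mD _ _ (integrableD mD idot idot)).
    by apply/measurable_realfun.measurable_EFinP; apply: measurable_realfun.measurable_funM.
  move=> x _; rewrite -EFinD !abse_EFin lee_fin.
  apply: (le_trans (normM _ _)); rewrite ger0_norm ?addr_ge0 //.
  by apply: lerD.
have ixw i : mu.-integrable (subsp W) (fun x => (xi i x * w x)%:E).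
  apply: (le_integrable mD _ _ (integrableD mD idot iw2)).
    by apply/measurable_realfun.measurable_EFinP; apply: measurable_realfun.measurable_funM.
  move=> x _; rewrite -EFinD !abse_EFin lee_fin.
  apply: (le_trans (normM _ _)); rewrite ger0_norm ?addr_ge0 ?sqr_ge0 //.
  by rewrite lerD2r.
pose S := frame_op W mu.
have Ixx i j : (\int[mu]_(x in subsp W) (xi i x * xi j x)%:E = (S i j)%:E)%E.
  rewrite /S /frame_op mxE /Rintegral fineK //.
  exact: (integrable_fin_num mD (ixx i j)).
have g2E x : (g x ^+ 2)%:E = (\sum_i \sum_j (c i 0 * c j 0)%:E * (xi i x * xi j x)%:E)%E.
  rewrite expr2 gE mulr_suml -sumEFin; apply: eq_bigr => i _.
  rewrite mulr_sumr -sumEFin; apply: eq_bigr => j _.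
  by rewrite -EFinM; congr (_%:E); ring.
have wgE x : (w x * g x)%:E = (\sum_i (c i 0)%:E * (xi i x * w x)%:E)%E.
  rewrite gE mulr_sumr -sumEFin; apply: eq_bigr => i _.
  by rewrite -EFinM; congr (_%:E); ring.
have ig2 : mu.-integrable (subsp W) (fun x => (g x ^+ 2)%:E).
  apply: (eq_integrable mD (fun x => (\sum_i \sum_j (c i 0 * c j 0)%:E * (xi i x * xi j x)%:E)%E)).
    by move=> x _; rewrite g2E.
  apply: (integrable_sum mD) => i _; apply: (integrable_sum mD) => j _.
  exact: (integrableZl mD).
have iwg : mu.-integrable (subsp W) (fun x => (w x * g x)%:E).
  apply: (eq_integrable mD (fun x => (\sum_i (c i 0)%:E * (xi i x * w x)%:E)%E)).
    by move=> x _; rewrite wgE.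
  apply: (integrable_sum mD) => i _; exact: (integrableZl mD).
pose b := \sum_i \sum_j c i 0 * c j 0 * S i j.
have Ig2 : (\int[mu]_(x in subsp W) (g x ^+ 2)%:E = b%:E)%E.
  rewrite (eq_integral (fun x => (\sum_i \sum_j (c i 0 * c j 0)%:E * (xi i x * xi j x)%:E)%E)); last first.
    by move=> x _; rewrite g2E.
  rewrite (integral_sum mD) //; last first.
    move=> i; apply: (integrable_sum mD) => j _; exact: (integrableZl mD).
  rewrite /b -sumEFin; apply: eq_bigr => i _.
  rewrite (integral_sum mD) //; last by move=> j; exact: (integrableZl mD).
  rewrite -sumEFin; apply: eq_bigr => j _.
  by rewrite (integralZl mD) // Ixx EFinM.
have Iwg : (\int[mu]_(x in subsp W) (w x * g x)%:E = (\sum_i c i 0 * (f *m oblique_proj W (orthc V)) 0 i)%:E)%E.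
  rewrite (eq_integral (fun x => (\sum_i (c i 0)%:E * (xi i x * w x)%:E)%E)); last first.
    by move=> x _; rewrite wgE.
  rewrite (integral_sum mD) //; last by move=> i; exact: (integrableZl mD).
  rewrite -sumEFin; apply: eq_bigr => i _.
  by rewrite (integralZl mD) // /xi -Hrep EFinM.
have Sym : S^T = S.
  apply/matrixP => i j; rewrite !mxE; apply: eq_Rintegral => x _; exact: mulrC.
have SdT : Sdag^T = Sdag := mp_sym Sym HSdag.
have PT : (oblique_proj V (orthc W))^T = oblique_proj W (orthc V).
  by rewrite -(proj_adj Hdirect Hspan) trmxK.
have key : \sum_i c i 0 * (f *m oblique_proj W (orthc V)) 0 i = b.
  have M : (f *m oblique_proj W (orthc V)) *m c = c^T *m S *m c.
    by case: HSdag => _ H2 _ _; apply: key_alg.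
  transitivity (((f *m oblique_proj W (orthc V)) *m c) 0 0).
    by rewrite [RHS]mxE; apply: eq_bigr => i _; rewrite mulrC.
  rewrite M mxE /b exchange_big /=; apply: eq_bigr => j _.
  rewrite mxE mulr_suml; apply: eq_bigr => i _; rewrite !mxE; ring.
pose a := fine (\int[mu]_(x in subsp W) (w x ^+ 2)%:E)%E.
have Aw : (\int[mu]_(x in subsp W) (w x ^+ 2)%:E)%E = a%:E.
  by rewrite /a fineK //; exact: (integrable_fin_num mD iw2).
have Iwg' : (\int[mu]_(x in subsp W) (w x * g x)%:E)%E = b%:E by rewrite Iwg key.
have iwgm2 : mu.-integrable (subsp W) (fun x => ((-2)%:E * (w x * g x)%:E)%E).
  exact: (integrableZl mD).
have Id : (\int[mu]_(x in subsp W) ((w x - g x) ^+ 2)%:E)%E = (a - b)%:E.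
  rewrite (eq_integral (fun x => (w x ^+ 2)%:E + ((-2)%:E * (w x * g x)%:E + (g x ^+ 2)%:E))%E); last first.
    by move=> x _; rewrite -EFinM -!EFinD; congr (_%:E); ring.
  rewrite (integralD mD iw2); last exact: (integrableD mD iwgm2 ig2).
  rewrite (integralD mD iwgm2 ig2) (integralZl mD) // Iwg' Ig2 Aw.
  by rewrite -EFinM -!EFinD; congr (_%:E); ring.
have H0 : (0 <= \int[mu]_(x in subsp W) ((w x - g x) ^+ 2)%:E)%E.
  by apply: integral_ge0 => x _; rewrite lee_fin sqr_ge0.
split.
- by rewrite Aw Ig2 Id -EFinD; congr (_%:E); ring.
- by rewrite Aw Ig2 lee_fin -subr_ge0 -lee_fin -Id.
have mf0 : measurable_fun (subsp W) (fun x => (w x - g x) ^+ 2).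
  apply: measurable_realfun.measurable_funX.
  exact: measurable_realfun.measurable_funB.
have mf : measurable_fun (subsp W) (fun x => ((w x - g x) ^+ 2)%:E).
  exact/measurable_realfun.measurable_EFinP.
have habs := ae_eq_integral_abs mu mD mf.
have I0 : (\int[mu]_(x in subsp W) `|((w x - g x) ^+ 2)%:E|)%E =
          (\int[mu]_(x in subsp W) ((w x - g x) ^+ 2)%:E)%E.
  by apply: eq_integral => x _; rewrite gee0_abs // lee_fin sqr_ge0.
rewrite Aw Ig2; split.
- move=> ab.
  have : (\int[mu]_(x in subsp W) `|((w x - g x) ^+ 2)%:E|)%E = 0.
    by rewrite I0 Id; move: ab => [->]; rewrite subrr.
  move/habs; apply: filterS => x H Dx.
  have := H Dx; rewrite /cst => /eqP; rewrite eqe sqrf_eq0 subr_eq0 => /eqP.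
  done.
- move=> Hae.
  have : ae_eq mu (subsp W) (fun x => ((w x - g x) ^+ 2)%:E) (cst 0).
    by apply: filterS Hae => x H Dx; rewrite /cst H // subrr expr2 mulr0.
  move/habs; rewrite I0 Id => /eqP; rewrite eqe subr_eq0 => /eqP ->.
  done.
Qed.
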